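(* Let $A=(a_{i,j})$ be an $n\times n$ matrix with indeterminate entries. Let $A'=(a'_{i,j})$ be the matrix obtained from $A$ by replacing the entries $a_{i,n}$ of its last column by entries $\tilde a_{i,n}$ (rational functions of the $a_{k,\ell}$) such that for every $1\le k\le n$ \[ \det\begin{pmatrix} a_{k,k}&\cdots&a_{k,n-1}&\tilde a_{k,n}\\ \vdots&&\vdots&\vdots\\ a_{n,k}&\cdots&a_{n,n-1}&\tilde a_{n,n}\end{pmatrix}=(-1)^{n-k}\,a_{k,n}\,\det\begin{pmatrix} a_{k+1,k}&\cdots&a_{k+1,n-1}\\ \vdots&&\vdots\\ a_{n,k}&\cdots&a_{n,n-1}\end{pmatrix}.\] Let $A''=(a''_{i,j})$ be the $n\times(n-1)$ matrix obtained from $A$ by removing its last column. Then for every $1\le i\le n-1$, \[ \frac{\det\big((a'_{k,\ell})_{k\ge i,\,k\ne i+1;\ \ell>i}\big)}{\det\big((a'_{k,\ell})_{k,\ell>i}\big)}=\frac{a_{i,n}}{a_{i+1,n}}+\frac{\det\big((a''_{k,\ell})_{k\ge i,\,k\ne i+1;\ \ell>i-1}\big)}{\det\big((a''_{k,\ell})_{k>i;\ \ell>i-1}\big)} .\]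
   Context: Submatrices are formed with the indicated row and column index sets taken in increasing order; the determinant of an empty matrix is $1$. The identities are identities of rational functions in the indeterminates $a_{i,j}$. *)

(* Defs.v *)
From HB Require Import structures.
From mathcomp Require Import all_boot all_order all_algebra.
From mathcomp Require Import fraction.
From mathcomp Require Import mpoly.
Set Implicit Arguments. Unset Strict Implicit. Unset Printing Implicit Defensive.
Import GRing.Theory.
Local Open Scope ring_scope.

Definition ratfun (n : nat) := {fraction {mpoly rat[n * n]}}.

(* The indeterminate a_{i,j}, with 1-based indices 1 <= i, j <= n
   (stored as variable number (i-1)*n + (j-1)). *)
Definition indet (n i j : nat) : ratfun n :=
  @FracField.tofrac _
    (match (insub ((i.-1) * n + j.-1)%N : option 'I_(n * n)) with
     | Some v => 'X_v
     | None => 0 (* never used: only 1 <= i, j <= n occur *)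
     end : {mpoly rat[n * n]}).

(* Determinant of the submatrix of the (nat-indexed) matrix f with row
   indices rs and column indices cs (listed in increasing order);
   only used when size rs = size cs.  The empty determinant is 1. *)
Definition subdet (K : comNzRingType) (f : nat -> nat -> K) (rs cs : seq nat) : K :=
  \det (\matrix_(i < size rs, j < size rs) f (nth 0%N rs i) (nth 0%N cs j)).

(* Main.v *)
Require Import Defs.
From HB Require Import structures.
From mathcomp Require Import all_boot all_order all_algebra.
From mathcomp Require Import fraction.
From mathcomp Require Import mpoly.
From mathcomp Require Import ring zify.
Import GRing.Theory.
Local Open Scope ring_scope.

Lemma subdetE (K : comNzRingType) (f : nat -> nat -> K) rs cs k : size rs = k ->
  subdet f rs cs = \det (\matrix_(i < k, j < k) f (nth 0%N rs i) (nth 0%N cs j)).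
Proof. by move=> <-. Qed.

Lemma subdet_shift (K : comNzRingType) (f : nat -> nat -> K) i rs cs : size cs = size rs ->
  subdet (fun r c => f (i + r)%N (i + c)%N) rs cs = subdet f (map (addn i) rs) (map (addn i) cs).
Proof.
move=> hs; rewrite (subdetE _ _ _ _ _ (size_map _ _)) /subdet; congr (\det _); apply/matrixP => x y; rewrite !mxE.
by rewrite !(nth_map 0%N) // hs.
Qed.

Lemma subdet_ext (K : comNzRingType) (f g : nat -> nat -> K) rs cs : size cs = size rs ->
  (forall x y, x \in rs -> y \in cs -> f x y = g x y) -> subdet f rs cs = subdet g rs cs.
Proof.
move=> hs H; rewrite /subdet; congr (\det _); apply/matrixP => x y; rewrite !mxE.
by apply: H; apply: mem_nth => //; rewrite hs.
Qed.

Lemma peel (R : comNzRingType) k (B : 'M[R]_k) j r a :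
  (forall x, B x j = a * (x == r)%:R) -> \det B = a * cofactor B r j.
Proof.
move=> H; rewrite (expand_det_col B j) (bigD1 r) //= big1 ?addr0 => [|x /negbTE xr].
  by rewrite H eqxx mulr1.
by rewrite H xr mulr0 mul0r.
Qed.

Lemma det2p (R : comNzRingType) p (B : 'M[R]_(p.+2)) :
  (forall z y : 'I_(p.+2), y != ord0 -> y != ord_max -> B z y = (z == y)%:R) ->
  \det B = B ord0 ord0 * B ord_max ord_max - B ord0 ord_max * B ord_max ord0.
Proof.
elim: p B => [|p IH] B HB.
  rewrite (expand_det_col B ord0) !big_ord_recl big_ord0 /cofactor !det_mx11 !mxE /=.
  rewrite addr0 expr0 mul1r expr1 mulN1r mulrN.
  rewrite [B (lift _ _) _ * _]mulrC.
  by congr (_ * B _ _ - B _ _ * B _ _); apply/val_inj.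
rewrite (peel _ _ B (lift ord0 ord0) (lift ord0 ord0) 1); last first.
  move=> x; rewrite HB ?mul1r //; apply/eqP=> /(congr1 val) //=.
rewrite mul1r /cofactor /= expr2 mulrNN mulr1 mul1r IH; last first.
  move=> z y y0 ym; rewrite !mxE HB; first by rewrite (inj_eq (@lift_inj _ _)).
  1,2: move: y0 ym; rewrite -!(inj_eq val_inj) /= /bump; case: y => [[|y] Hy] //=.
rewrite /row' /col' !mxE.
have -> : lift (lift ord0 ord0) (ord0 : 'I_p.+2) = ord0 :> 'I_p.+3 by apply/val_inj.
have -> : lift (lift ord0 ord0) (ord_max : 'I_p.+2) = ord_max :> 'I_p.+3 by apply/val_inj.
by [].
Qed.

Lemma rcE (R : comNzRingType) k (B : 'M[R]_(k.+1)) i j x y :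
  row' i (col' j B) x y = B (lift i x) (lift j y).
Proof. by rewrite !mxE. Qed.

Lemma jacobi (F : fieldType) p (M : 'M[F]_(p.+2)) : \det M != 0 ->
  \det M * \det (\matrix_(x < p, y < p) M (inord x.+2) (inord y.+1)) =
  \det (row' ord0 (col' ord0 M)) * \det (row' (inord 1) (col' ord_max M)) -
  \det (row' ord0 (col' ord_max M)) * \det (row' (inord 1) (col' ord0 M)).
Proof.
move=> dM.
set q := \det (\matrix_(x < p, y < p) M (inord x.+2) (inord y.+1)).
set A := \adj M.
have i1 : nat_of_ord (inord 1 : 'I_(p.+2)) = 1%N by rewrite inordK.
pose K := (\matrix_(z, y) if y == ord0 then A z ord0 else if y == ord_max then A z (inord 1)
   else (z == y)%:R) : 'M_(p.+2).
have m0 : (ord_max == ord0 :> 'I_(p.+2)) = false by [].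
have detK : \det K = A ord0 ord0 * A ord_max (inord 1) - A ord0 (inord 1) * A ord_max ord0.
  rewrite det2p; first by rewrite !mxE eqxx m0 eqxx.
  by move=> z y y0 ym; rewrite mxE (negbTE y0) (negbTE ym).
have MKE : forall x y, (M *m K) x y = if y == ord0 then \det M * (x == ord0)%:R
    else if y == ord_max then \det M * (x == inord 1)%:R else M x y.
  move=> x y; rewrite mxE.
  case: (eqVneq y ord0) => [->|y0].
    rewrite (eq_bigr (fun z => M x z * A z ord0)) => [|z _]; last by rewrite mxE eqxx.
    have := congr1 (fun B : 'M[F]_(p.+2) => B x ord0) (mul_mx_adj M); rewrite !mxE => ->.
    by rewrite mulr_natr.
  case: (eqVneq y ord_max) => [->|ym].
    rewrite (eq_bigr (fun z => M x z * A z (inord 1))) => [|z _]; last by rewrite mxE eqxx m0.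
    have := congr1 (fun B : 'M[F]_(p.+2) => B x (inord 1)) (mul_mx_adj M); rewrite !mxE => ->.
    by rewrite mulr_natr.
  rewrite (bigD1 y) //= big1 ?addr0 => [|z zy]; first by rewrite mxE (negbTE y0) (negbTE ym) eqxx mulr1.
  by rewrite mxE (negbTE y0) (negbTE ym) (negbTE zy) mulr0.
set s := (-1) ^+ p : F.
have detMK : \det (M *m K) = \det M ^+ 2 * s * q.
  rewrite (peel _ _ (M *m K) ord0 ord0 (\det M)); last by move=> x; rewrite MKE eqxx.
  rewrite /cofactor /= expr0 mul1r.
  rewrite (peel _ _ _ ord_max ord0 (\det M)); last first.
    move=> x; rewrite rcE MKE.
    have -> : lift ord0 (ord_max : 'I_(p.+1)) = ord_max by apply/val_inj.
    rewrite m0 eqxx; congr (_ * (_ : bool)%:R).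
    by rewrite -!(inj_eq val_inj) /= i1.
  rewrite /cofactor (_ : (ord0 + ord_max)%N = p) // -/s mulrA -expr2 -mulrA; congr (_ * (_ * _)).
  rewrite /q; apply: congr1; apply/matrixP => x y; rewrite rcE rcE MKE mxE.
  have -> : lift ord0 (lift ord_max y) = inord y.+1 :> 'I_(p.+2).
    apply: ord_inj; rewrite lift0 lift_max inordK //; have := ltn_ord y; rewrite /=; lia.
  have yl : (y.+1 < p.+2)%N by have := ltn_ord y; rewrite /=; lia.
  rewrite ifF; last by rewrite -(inj_eq (@ord_inj _)) inordK.
  rewrite ifF; last by rewrite -(inj_eq (@ord_inj _)) inordK //; apply/negbTE/eqP; have := ltn_ord y; rewrite /=; lia.
  congr (M _ _); apply: ord_inj; rewrite !lift0 inordK //; have := ltn_ord x; rewrite /=; lia.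
have ss : s * s = 1 by rewrite /s -expr2 -exprM mulnC exprM sqrrN expr1n expr1n.
have sN0 : s != 0 by apply/eqP => s0; move: ss; rewrite s0 mul0r => /eqP; rewrite eq_sym oner_eq0.
have hK : \det K = s * (\det (row' ord0 (col' ord0 M)) * \det (row' (inord 1) (col' ord_max M)) -
  \det (row' ord0 (col' ord_max M)) * \det (row' (inord 1) (col' ord0 M))).
  rewrite detK /A !mxE /cofactor /= i1 /= !addn0 add0n expr0 !mul1r !exprS -/s.
  ring.
have e : \det M * s * (\det (row' ord0 (col' ord0 M)) * \det (row' (inord 1) (col' ord_max M)) -
  \det (row' ord0 (col' ord_max M)) * \det (row' (inord 1) (col' ord0 M))) = \det M * s * (\det M * q).
  by rewrite -mulrA -hK -det_mulmx detMK; ring.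
by apply: (mulfI (mulf_neq0 dM sN0)); rewrite e.
Qed.

Definition ent n r c : {mpoly rat[n * n]} :=
    (match (insub ((r.-1) * n + c.-1)%N : option 'I_(n * n)) with
     | Some v => 'X_v
     | None => 0
     end : {mpoly rat[n * n]}).

Lemma indetE n r c : indet n r c = tofrac (ent n r c).
Proof. by []. Qed.

Lemma entX n r c : (1 <= r <= n)%N -> (1 <= c <= n)%N ->
  exists v : 'I_(n * n), ent n r c = 'X_v /\ nat_of_ord v = ((r.-1) * n + c.-1)%N.
Proof.
move=> /andP[r1 rn] /andP[c1 cn]; rewrite /ent; case: insubP => [v _ hv|hn].
  by exists v.
exfalso; move/negP: hn; apply.
nia.
Qed.

Lemma indet_nz n r c : (1 <= r <= n)%N -> (1 <= c <= n)%N -> indet n r c != 0.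
Proof.
move=> hr hc; rewrite indetE tofrac_eq0; have [v [-> _]] := entX _ _ _ hr hc.
apply/eqP => h; have := congr1 (meval (fun _ => 1 : rat)) h.
by rewrite mevalXU meval0 => /eqP; rewrite oner_eq0.
Qed.

Lemma minor_nz n c L : (1 <= c)%N -> (c + L <= n)%N ->
  subdet (indet n) (iota c.+1 L) (iota c L) != 0.
Proof.
move=> c1 cL.
rewrite (subdetE _ _ _ _ _ (size_iota _ _)).
have -> : \matrix_(i < L, j < L) indet n (nth 0%N (iota c.+1 L) i) (nth 0%N (iota c L) j) =
   map_mx (@tofrac _) (\matrix_(i < L, j < L) ent n (c.+1 + i) (c + j)).
  by apply/matrixP => i j; rewrite !mxE !nth_iota.
rewrite det_map_mx tofrac_eq0.
pose pt := fun v : 'I_(n * n) => ((v %/ n)%N == (v %% n).+1)%:R : rat.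
apply/eqP => h0; have := congr1 (meval pt) h0; rewrite meval0.
rewrite -det_map_mx.
have -> : map_mx (meval pt) (\matrix_(i < L, j < L) ent n (c.+1 + i) (c + j)) = 1%:M.
  apply/matrixP => i j; rewrite !mxE.
  have hi := ltn_ord i; have hj := ltn_ord j.
  have h1 : (1 <= c.+1 + i <= n)%N by apply/andP; split; lia.
  have h2 : (1 <= c + j <= n)%N by apply/andP; split; lia.
  have [v [-> hv]] := entX _ _ _ h1 h2.
  rewrite mevalXU /pt hv /= divnMDl; last by lia.
  rewrite divn_small; last by lia.
  rewrite modnMDl modn_small; last by lia.
  rewrite addn0 (_ : (c + j).-1.+1 = c + j)%N; last by lia.
  by rewrite eqn_add2l.
by rewrite det1 => /eqP; rewrite oner_eq0.
Qed.

Lemma lift1 p (x : 'I_p.+1) : nat_of_ord (lift (inord 1 : 'I_p.+2) x) = nth 0%N (0%N :: iota 2 p) x.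
Proof.
case: x => [[|x] hx]; rewrite /= inordK //= nth_iota; rewrite /bump /=; lia.
Qed.

Lemma jacobi_subdet0 (F : fieldType) (f : nat -> nat -> F) p :
  subdet f (iota 0 p.+2) (iota 0 p.+2) != 0 ->
  subdet f (iota 0 p.+2) (iota 0 p.+2) * subdet f (iota 2 p) (iota 1 p) =
  subdet f (iota 1 p.+1) (iota 1 p.+1) * subdet f (0%N :: iota 2 p) (iota 0 p.+1) -
  subdet f (iota 1 p.+1) (iota 0 p.+1) * subdet f (0%N :: iota 2 p) (iota 1 p.+1).
Proof.
set M := \matrix_(x < p.+2, y < p.+2) f x y.
have eD : subdet f (iota 0 p.+2) (iota 0 p.+2) = \det M.
  rewrite (subdetE _ _ _ _ _ (size_iota _ _)); apply: congr1; apply/matrixP => x y.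
  by rewrite !mxE !nth_iota // !add0n.
have eQ : subdet f (iota 2 p) (iota 1 p) = \det (\matrix_(x < p, y < p) M (inord x.+2) (inord y.+1)).
  rewrite (subdetE _ _ _ _ _ (size_iota _ _)); apply: congr1; apply/matrixP => x y.
  have hx := ltn_ord x; have hy := ltn_ord y.
  rewrite !mxE !nth_iota // !inordK //; lia.
have e00 : subdet f (iota 1 p.+1) (iota 1 p.+1) = \det (row' ord0 (col' ord0 M)).
  rewrite (subdetE _ _ _ _ _ (size_iota _ _)); apply: congr1; apply/matrixP => x y.
  by rewrite rcE !mxE !nth_iota // !lift0.
have e1m : subdet f (0%N :: iota 2 p) (iota 0 p.+1) = \det (row' (inord 1) (col' ord_max M)).
  rewrite (subdetE _ _ _ _ p.+1); last by rewrite /= size_iota.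
  apply: congr1; apply/matrixP => x y.
  by rewrite rcE !mxE lift_max lift1 nth_iota // add0n.
have e0m : subdet f (iota 1 p.+1) (iota 0 p.+1) = \det (row' ord0 (col' ord_max M)).
  rewrite (subdetE _ _ _ _ _ (size_iota _ _)); apply: congr1; apply/matrixP => x y.
  by rewrite rcE !mxE lift_max lift0 !nth_iota.
have e10 : subdet f (0%N :: iota 2 p) (iota 1 p.+1) = \det (row' (inord 1) (col' ord0 M)).
  rewrite (subdetE _ _ _ _ p.+1); last by rewrite /= size_iota.
  apply: congr1; apply/matrixP => x y.
  by rewrite rcE !mxE lift0 lift1 nth_iota.
rewrite eD eQ e00 e1m e0m e10 => dM.
exact: jacobi.
Qed.

Lemma jacobi_shift (F : fieldType) (g : nat -> nat -> F) i p :
  subdet g (iota i p.+2) (iota i p.+2) != 0 ->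
  subdet g (iota i p.+2) (iota i p.+2) * subdet g (iota i.+2 p) (iota i.+1 p) =
  subdet g (iota i.+1 p.+1) (iota i.+1 p.+1) * subdet g (i :: iota i.+2 p) (iota i p.+1) -
  subdet g (iota i.+1 p.+1) (iota i p.+1) * subdet g (i :: iota i.+2 p) (iota i.+1 p.+1).
Proof.
have e : forall j k, iota (i + j) k = map (addn i) (iota j k) := fun j k => iotaDl i j k.
have -> : i :: iota i.+2 p = map (addn i) (0%N :: iota 2 p) by rewrite /= addn0 -e addn2.
have -> : iota i p.+2 = map (addn i) (iota 0 p.+2) by rewrite -e addn0.
have -> : iota i p.+1 = map (addn i) (iota 0 p.+1) by rewrite -e addn0.
have -> : iota i.+1 p.+1 = map (addn i) (iota 1 p.+1) by rewrite -e addn1.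
have -> : iota i.+1 p = map (addn i) (iota 1 p) by rewrite -e addn1.
have -> : iota i.+2 p = map (addn i) (iota 2 p) by rewrite -e addn2.
rewrite -!subdet_shift; try by rewrite /= !size_iota.
exact: jacobi_subdet0.
Qed.

Lemma alg (F : fieldType) (s ain ai1 P Q R X : F) : s != 0 -> ain != 0 -> ai1 != 0 -> P != 0 -> Q != 0 ->
  (-1 * s * ain * P) * Q = (s * ai1 * Q) * R - P * X ->
  X / (s * ai1 * Q) = ain / ai1 + R / P.
Proof.
move=> sn an a1n Pn Qn J.
have PX : P * X = s * ai1 * Q * R - (-1 * s * ain * P) * Q by rewrite J; ring.
rewrite -[X](mulKf Pn) PX.
field.
by rewrite Pn a1n Qn sn.
Qed.

Theorem lemma4p3 (n : nat) (at_ : nat -> ratfun n) :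
  let a := indet n in
  let a' := fun k l => if l == n then at_ k else a k l in
  let a'' := a in
  (forall k, (1 <= k <= n)%N ->
     subdet a' (iota k (n - k).+1) (iota k (n - k).+1) =
     (-1) ^+ (n - k) * a k n * subdet a (iota k.+1 (n - k)) (iota k (n - k))) ->
  forall i, (1 <= i <= n - 1)%N ->
    subdet a' (i :: iota i.+2 (n - i - 1)) (iota i.+1 (n - i)) /
      subdet a' (iota i.+1 (n - i)) (iota i.+1 (n - i)) =
    a i n / a i.+1 n +
    subdet a'' (i :: iota i.+2 (n - i - 1)) (iota i (n - i)) /
      subdet a'' (iota i.+1 (n - i)) (iota i (n - i)).
Proof.
move=> a a' a'' H i /andP[i1 iN].
have [p hp] : exists p, (n - i)%N = p.+1 by exists (n - i).-1; lia.
have hp1 : (n - i - 1)%N = p by lia.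
have hp2 : (n - i.+1)%N = p by lia.
have Hi := H i (ltac:(apply/andP; split; lia)).
have Hi1 := H i.+1 (ltac:(apply/andP; split; lia)).
rewrite hp in Hi; rewrite hp2 in Hi1; rewrite hp1 hp /a''.
have ext : forall rs cs, size cs = size rs -> (forall y, y \in cs -> y < n)%N ->
    subdet a' rs cs = subdet a rs cs.
  move=> rs cs hs hc; apply: subdet_ext => // x y _ /hc yn.
  by rewrite /a' ifF //; apply/negbTE; rewrite neq_ltn yn.
have Pn : subdet a (iota i.+1 p.+1) (iota i p.+1) != 0 by apply: minor_nz; lia.
have Qn : subdet a (iota i.+2 p) (iota i.+1 p) != 0 by apply: minor_nz; lia.
have ain : a i n != 0 by apply: indet_nz; apply/andP; split; lia.
have ai1n : a i.+1 n != 0 by apply: indet_nz; apply/andP; split; lia.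
have sn : (-1) ^+ p != 0 :> ratfun n by rewrite signr_eq0.
have Dn : subdet a' (iota i p.+2) (iota i p.+2) != 0.
  rewrite Hi; apply: mulf_neq0 Pn; apply: mulf_neq0 ain.
  by rewrite signr_eq0.
have J := jacobi_shift _ a' i p Dn.
rewrite (ext (iota i.+2 p) (iota i.+1 p)) in J; last 2 first.
- by rewrite !size_iota.
- by move=> y; rewrite mem_iota; lia.
rewrite (ext (i :: iota i.+2 p) (iota i p.+1)) in J; last 2 first.
- by rewrite /= !size_iota.
- by move=> y; rewrite mem_iota; lia.
rewrite (ext (iota i.+1 p.+1) (iota i p.+1)) in J; last 2 first.
- by rewrite !size_iota.
- by move=> y; rewrite mem_iota; lia.
rewrite Hi Hi1 in J; rewrite Hi1.
set X := subdet a' (i :: iota i.+2 p) (iota i.+1 p.+1) in J *.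
set P := subdet a (iota i.+1 p.+1) (iota i p.+1) in J Pn *.
set Q := subdet a (iota i.+2 p) (iota i.+1 p) in J Qn *.
set R := subdet a (i :: iota i.+2 p) (iota i p.+1) in J *.
rewrite exprS in J.
exact: (alg _ _ _ _ _ _ _ _ sn ain ai1n Pn Qn J).
Qed.
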